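(* Let ${\mathcal M}$ be a GLP-algebra and $n<\omega$, and suppose ${\mathcal M}$ enjoys the $\langle n\rangle$-reduction property. Then for every $\phi\in{\mathcal M}$, $$\{Q_n^k(\phi):k<\omega\}\vdash_{\Pi_{n+1}({\mathcal M})}\langle n+1\rangle\phi,$$ i.e. for every $z\in\Pi_{n+1}({\mathcal M})$, if $\langle n+1\rangle\phi\le z$ then there is $k<\omega$ with $Q_n^k(\phi)\le z$.
   Context: A GLP-algebra is a boolean algebra ${\mathcal M}$ with unary operations $\langle n\rangle$, $n<\omega$, satisfying for all $x,y$: (i) $\langle n\rangle(x\vee y)=\langle n\rangle x\vee\langle n\rangle y$; (ii) $\langle n\rangle 0=0$; (iii) $\langle n\rangle x=\langle n\rangle(x\wedge\neg\langle n\rangle x)$; (iv) $\langle n\rangle x\le\langle m\rangle x$ for $m\le n$; (v) $\langle m\rangle x\le[n]\langle m\rangle x$ for $m<n$, where $[n]x:=\neg\langle n\rangle\neg x$. Define $Q_n^0(x)=\top$, $Q_n^{k+1}(x)=\langle n\rangle(x\wedge Q_n^k(x))$. For $A\subseteq{\mathcal M}$, $A\vdash x$ means there are $a_1,\dots,a_k\in A$ with $a_1\wedge\dots\wedge a_k\le x$; $A\vdash B$ means $A\vdash x$ for all $x\in B$; a single element stands for the singleton. $A\vdash_n B$ means: for all $z\in{\mathcal M}$, $B\vdash\langle n\rangle z$ implies $A\vdash\langle n\rangle z$. ${\mathcal M}$ enjoys the $\langle n\rangle$-reduction property if for all $x\in{\mathcal M}$, $\{Q_n^k(x):k<\omega\}\vdash_n\langle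 n+1\rangle x$. $\Pi_{n+1}({\mathcal M})$ is the closure under $\vee,\wedge$ of $\{\top,\bot\}\cup\{\langle k\rangle z:k\le n,z\in{\mathcal M}\}\cup\{[k]z:k<n,z\in{\mathcal M}\}$. $A\vdash_{\Pi_{n+1}({\mathcal M})}B$ means: for all $z\in\Pi_{n+1}({\mathcal M})$, $B\vdash z$ implies $A\vdash z$. *)

(* Defs.v *)
(* a boolean algebra is a ctbDistrLatticeType
   (complemented distributive lattice with top and bottom). *)
From HB Require Import structures.
From mathcomp Require Import all_boot all_order.
Set Implicit Arguments. Unset Strict Implicit. Unset Printing Implicit Defensive.
Import Order.TTheory.
Local Open Scope order_scope.

Record GLPalgebra (disp : Order.disp_t) (T : ctbDistrLatticeType disp) := {
  dia : nat -> T -> T;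
  dia_join : forall n x y, dia n (x `|` y) = dia n x `|` dia n y;
  dia_bot : forall n, dia n \bot = \bot;
  dia_loeb : forall n x, dia n x = dia n (x `&` ~` dia n x);
  dia_mono_idx : forall m n x, (m <= n)%N -> dia n x <= dia m x;
  dia_box : forall m n x, (m < n)%N -> dia m x <= ~` dia n (~` dia m x)
}.

Section Defs.
Context {disp : Order.disp_t} {T : ctbDistrLatticeType disp} (M : GLPalgebra T).

Definition box (n : nat) (x : T) : T := ~` dia M n (~` x).

Fixpoint Q (n k : nat) (x : T) : T :=
  match k with
  | 0 => \top
  | k'.+1 => dia M n (x `&` Q n k' x)
  end.

Definition derives (A : T -> Prop) (x : T) : Prop :=
  exists s : seq T, (forall a, a \in s -> A a) /\ \meet_(a <- s) a <= x.

Definition derives_set (A B : T -> Prop) : Prop := forall x, B x -> derives A x.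

Definition derives_n (n : nat) (A B : T -> Prop) : Prop :=
  forall z, derives B (dia M n z) -> derives A (dia M n z).

Definition Qset (n : nat) (x : T) : T -> Prop := fun a => exists k, a = Q n k x.

Definition singleton (b : T) : T -> Prop := fun a => a = b.

Definition reduction_property (n : nat) : Prop :=
  forall x, derives_n n (Qset n x) (singleton (dia M n.+1 x)).

(* Pi_{n+1}(M): closure under join/meet of top, bot, <k>z (k <= n), [k]z (k < n) *)
Inductive PiS (n : nat) : T -> Prop :=
  | PiS_top : PiS n \top
  | PiS_bot : PiS n \bot
  | PiS_dia : forall k z, (k <= n)%N -> PiS n (dia M k z)
  | PiS_box : forall k z, (k < n)%N -> PiS n (box k z)
  | PiS_join : forall x y, PiS n x -> PiS n y -> PiS n (x `|` y)
  | PiS_meet : forall x y, PiS n x -> PiS n y -> PiS n (x `&` y).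

Definition derives_PiS (n : nat) (A B : T -> Prop) : Prop :=
  forall z, PiS n z -> derives B z -> derives A z.

End Defs.

(* Main.v *)
Require Import Defs.
From mathcomp Require Import all_boot all_order.
Set Implicit Arguments. Unset Strict Implicit. Unset Printing Implicit Defensive.
Import Order.Theory.
Local Open Scope order_scope.

Section Helpers.
Context {disp : Order.disp_t} {T : ctbDistrLatticeType disp} (M : GLPalgebra T).
Local Notation D := (dia M).

Lemma shunt (x b d : T) : (x `&` b <= d) <-> (x <= d `|` ~` b).
Proof.
split=> H.
- have -> : x = (x `&` b) `|` (x `&` ~` b) by rewrite -meetUr joinxC meetx1.
  by apply: leU2 => //; apply: leIr.
- apply: le_trans (leI2 H (lexx b)) _.
  by rewrite meetUl meetCx joinx0 leIl.
Qed.

Lemma dia_mono m (x y : T) : x <= y -> D m x <= D m y.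
Proof. by move/join_idPr=> <-; rewrite dia_join leUl. Qed.

Lemma dia_trans m (a : T) : D m (D m a) <= D m a.
Proof.
set x := a `|` D m a.
have h1 : D m x <= D m a.
  rewrite dia_loeb; apply: dia_mono; apply/shunt.
  rewrite complK /x; apply: leU2 => //; exact: dia_mono (leUl _ _).
by apply: le_trans h1; apply: dia_mono; rewrite /x leUr.
Qed.

Lemma box_dia m (u v : T) : box M m u `&` D m v <= D m (u `&` v).
Proof.
rewrite meetC; apply/shunt; rewrite /box complK.
have e : v = (v `&` u) `|` (v `&` ~` u) by rewrite -meetUr joinxC meetx1.
rewrite {1}e dia_join; apply: leU2; first by rewrite meetC.
by apply: dia_mono; rewrite leIr.
Qed.

Lemma box_mono m (x y : T) : x <= y -> box M m x <= box M m y.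
Proof. by move=> h; rewrite /box leC; apply: dia_mono; rewrite leC. Qed.

Lemma box_meet m (x y : T) : box M m x `&` box M m y = box M m (x `&` y).
Proof. by rewrite /box -complU -dia_join complI. Qed.

Lemma box_top m : box M m \top = \top.
Proof. by rewrite /box compl1 dia_bot compl0. Qed.

Lemma dia_le_box k m (x : T) : (k < m)%N -> D k x <= box M m (D k x).
Proof. move=> h; exact: dia_box. Qed.

Lemma Q_anti n x k K : (k <= K)%N -> Q M n K x <= Q M n k x.
Proof.
elim: K k => [|K IH] [|k] //= h; rewrite ?lex1 //.
by apply: dia_mono; apply: leI2 => //; apply: IH.
Qed.

Definition Datom n (d : T) := exists w, D n w <= d /\ forall psi, D n.+1 psi `&` d <= D n w.
Definition Batom n (b : T) := [/\ b <= box M n b, b <= box M n.+1 b & D n.+1 b <= b].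
Definition Clause n (c : T) := exists d b, [/\ Datom n d, Batom n b & c = d `|` ~` b].

Inductive CNF n : T -> Prop :=
| CNF_cl c : Clause n c -> CNF n c
| CNF_meet x y : CNF n x -> CNF n y -> CNF n (x `&` y).

Lemma Datom_join n d1 d2 : Datom n d1 -> Datom n d2 -> Datom n (d1 `|` d2).
Proof.
move=> [w1 [h1 g1]] [w2 [h2 g2]]; exists (w1 `|` w2); rewrite dia_join; split.
  exact: leU2.
by move=> psi; rewrite meetUr; apply: leU2.
Qed.

Lemma Batom_meet n b1 b2 : Batom n b1 -> Batom n b2 -> Batom n (b1 `&` b2).
Proof.
move=> [a1 a2 a3] [c1 c2 c3]; split; rewrite -?box_meet; try exact: leI2.
rewrite lexI; apply/andP; split.
  by apply: le_trans a3; apply: dia_mono; rewrite leIl.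
by apply: le_trans c3; apply: dia_mono; rewrite leIr.
Qed.

Lemma Clause_join n c1 c2 : Clause n c1 -> Clause n c2 -> Clause n (c1 `|` c2).
Proof.
move=> [d1 [b1 [h1 g1 ->]]] [d2 [b2 [h2 g2 ->]]].
exists (d1 `|` d2), (b1 `&` b2); split; [exact: Datom_join|exact: Batom_meet|].
by rewrite complI -!joinA (joinCA (~` b1)).
Qed.

Lemma CNF_join_cl n c y : Clause n c -> CNF n y -> CNF n (c `|` y).
Proof.
move=> hc; elim=> [c' h|x y' _ IH1 _ IH2].
  by apply: CNF_cl; apply: Clause_join.
by rewrite joinIr; apply: CNF_meet.
Qed.

Lemma CNF_join n x y : CNF n x -> CNF n y -> CNF n (x `|` y).
Proof.
move=> hx hy; elim: hx => [c h|x1 x2 _ IH1 _ IH2]; first exact: CNF_join_cl.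
by rewrite joinIl; apply: CNF_meet.
Qed.

Lemma Batom_top n : Batom n \top.
Proof. by split; rewrite ?box_top ?lex1. Qed.

Lemma Datom_bot n : Datom n \bot.
Proof. by exists \bot; rewrite dia_bot; split=> // psi; rewrite meetx0. Qed.

Lemma Datom_dia n k a : (k <= n)%N -> Datom n (D k a).
Proof.
rewrite leq_eqVlt => /orP [/eqP ->|hk].
  by exists a; split=> // psi; rewrite leIr.
exists (D k a); split.
  apply: le_trans (dia_trans k a); exact: dia_mono_idx (ltnW hk).
move=> psi; rewrite meetC.
apply: le_trans (leI2 (@dia_le_box k n.+1 a (ltn_trans hk (ltnSn n))) (lexx _)) _.
apply: le_trans (box_dia _ _ _) _.
apply: le_trans (dia_mono_idx M _ (leqnSn n)); apply: dia_mono; exact: leIl.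
Qed.

Lemma Batom_dia n k a : (k < n)%N -> Batom n (D k a).
Proof.
move=> hk; split.
- exact: dia_le_box.
- exact: dia_le_box (ltn_trans hk (ltnSn n)).
- apply: le_trans (dia_trans k a); apply: dia_mono_idx; exact: ltnW (ltn_trans hk _).
Qed.

Lemma PiS_CNF n z : PiS M n z -> CNF n z.
Proof.
elim=> {z}.
- apply: CNF_cl; exists \bot, \bot; split; [exact: Datom_bot| |by rewrite compl0 join0x].
  by split; rewrite ?lex0 ?dia_bot ?le0x.
- apply: CNF_cl; exists \bot, \top; split; [exact: Datom_bot|exact: Batom_top|].
  by rewrite compl1 joinx0.
- move=> k a hk; apply: CNF_cl; exists (D k a), \top; split;
    [exact: Datom_dia|exact: Batom_top|by rewrite compl1 joinx0].
- move=> k a hk; apply: CNF_cl; exists \bot, (D k (~` a)); split;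
    [exact: Datom_bot|exact: Batom_dia|by rewrite join0x].
- by move=> x y _ h1 _ h2; apply: CNF_join.
- by move=> x y _ h1 _ h2; apply: CNF_meet.
Qed.

Definition Good n (c : T) := forall psi, D n.+1 psi <= c -> exists K, Q M n K psi <= c.

Lemma Q_meet n b psi K : b <= box M n b -> Q M n K psi `&` b <= Q M n K (psi `&` b).
Proof.
move=> hb; elim: K => [|K IH] /=; first exact: leIl.
rewrite meetC; apply: le_trans (leI2 hb (lexx _)) _.
apply: le_trans (box_dia _ _ _) _; apply: dia_mono.
rewrite lexI; apply/andP; split.
  by rewrite lexI; apply/andP; split; [apply: leIxr; apply: leIl|apply: leIl].
by apply: le_trans IH; rewrite lexI; apply/andP; split; [apply: leIxr; apply: leIr|apply: leIl].
Qed.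

Lemma meet_Qset n x (s : seq T) : (forall a, a \in s -> Qset M n x a) ->
  exists K, Q M n K x <= \meet_(a <- s) a.
Proof.
elim: s => [|a s IH] h; first by exists 0%N; rewrite big_nil.
have [K hK] := IH (fun a' ha' => h a' (mem_behead (s:=a::s) ha')).
have [k ->] := h a (mem_head _ _).
exists (maxn k K); rewrite big_cons lexI; apply/andP; split.
  exact: Q_anti (leq_maxl _ _).
apply: le_trans hK; exact: Q_anti (leq_maxr _ _).
Qed.

Lemma Good_clause n c : reduction_property M n -> Clause n c -> Good n c.
Proof.
move=> red [d [b [[w [hw1 hw2]] [hb1 hb2 hb3] ->]]] psi hpsi.
set psi' := psi `&` b.
have h1 : D n.+1 psi' <= D n w.
  apply: le_trans (hw2 psi') ; rewrite lexI lexx /=.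
  have e : D n.+1 psi' <= D n.+1 psi `&` b.
    rewrite lexI; apply/andP; split; first by apply: dia_mono; exact: leIl.
    apply: le_trans hb3; apply: dia_mono; exact: leIr.
  by apply: le_trans e _; apply/shunt.
have [s [hs hm]] : derives (Qset M n psi') (D n w).
  apply: red; exists [:: D n.+1 psi']; split.
    by move=> a; rewrite inE => /eqP ->.
  by rewrite big_cons big_nil meetx1.
have [K hK] := meet_Qset hs.
exists K; apply/shunt.
apply: le_trans (Q_meet _ _ hb1) _.
by apply: le_trans hw1; apply: le_trans hK hm.
Qed.

Lemma Good_CNF n z : reduction_property M n -> CNF n z -> Good n z.
Proof.
move=> red; elim=> [c h|x y _ IH1 _ IH2]; first exact: Good_clause.
move=> psi; rewrite lexI => /andP [h1 h2].
have [K1 hK1] := IH1 _ h1; have [K2 hK2] := IH2 _ h2.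
exists (maxn K1 K2); rewrite lexI; apply/andP; split.
  apply: le_trans hK1; exact: Q_anti (leq_maxl _ _).
apply: le_trans hK2; exact: Q_anti (leq_maxr _ _).
Qed.

End Helpers.

Theorem theorem2 (disp : Order.disp_t) (T : ctbDistrLatticeType disp)
  (M : GLPalgebra T) (n : nat) :
  reduction_property M n ->
  forall phi : T,
    derives_PiS M n (Qset M n phi) (singleton (dia M n.+1 phi)).
Proof.
move=> red phi z hz [s [hs hm]].
have h : dia M n.+1 phi <= z.
  apply: le_trans hm; elim: s hs => [|a s IH] hs; first by rewrite big_nil lex1.
  rewrite big_cons lexI; apply/andP; split.
    by rewrite (hs a (mem_head _ _)).
  by apply: IH => a' ha'; apply: hs; rewrite inE ha' orbT.
have [K hK] := Good_CNF red (PiS_CNF hz) h.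
exists [:: Q M n K phi]; split.
  by move=> a; rewrite inE => /eqP ->; exists K.
by rewrite big_cons big_nil meetx1.
Qed.
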